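(* Let $|\psi\rangle\in(\mathbb{C}^2)^{\otimes5}$ be the 5-qubit ring graph state, i.e. the (up to phase) unique state with $A_i|\psi\rangle=|\psi\rangle$ for $i=1,\dots,5$, where $A_i=Z_{i-1}X_iZ_{i+1}$ with indices taken cyclically ($Z_0=Z_5$, $Z_6=Z_1$). Fix $a\in(0,1/2)$ and let $h=h_1\otimes\cdots\otimes h_5$ with $h_1=h_3=(\tfrac12\mathbb{1}+aZ)^{1/2}$, $h_2=(\tfrac12\mathbb{1}+aX)^{1/2}$, $h_4=h_5=(\tfrac12\mathbb{1})^{1/2}$ (positive square roots), so that $h^\dagger h=(\tfrac12\mathbb{1}+aZ)\otimes(\tfrac12\mathbb{1}+aX)\otimes(\tfrac12\mathbb{1}+aZ)\otimes\tfrac12\mathbb{1}\otimes\tfrac12\mathbb{1}$. Then $|\psi\rangle$ can be transformed into the normalized state $h|\psi\rangle/\|h|\psi\rangle\|$ by a SEP map, but not by any $\mathrm{SEP}_1$ map.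
   Context: $X,Z$ are the Pauli matrices and $X_i,Z_i$ denote them acting on qubit $i$ (identity elsewhere). A CPTP map on $\mathcal{B}((\mathbb{C}^2)^{\otimes5})$ is in SEP if it admits a Kraus decomposition $\Lambda(\rho)=\sum_iK_i\rho K_i^\dagger$, $\sum_iK_i^\dagger K_i=\mathbb{1}$, with all Kraus operators of product form $K_i=\bigotimes_{j=1}^5K_i^{(j)}$, $K_i^{(j)}\in M(2,\mathbb{C})$; it is in $\mathrm{SEP}_1$ if such a decomposition exists with all $K_i^{(j)}\in GL(2,\mathbb{C})$. A transformation of $|\alpha\rangle$ into $|\beta\rangle$ means $\Lambda(|\alpha\rangle\langle\alpha|)=|\beta\rangle\langle\beta|$. *)

(* Defs.v *)
From HB Require Import structures.
From mathcomp Require Import all_boot all_order all_algebra.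
From mathcomp Require Import complex mxtens reals.
Set Implicit Arguments. Unset Strict Implicit. Unset Printing Implicit Defensive.
Import Order.TTheory GRing.Theory Num.Theory.
Local Open Scope ring_scope.

Section QuantumDefs.
Context {C : numClosedFieldType}.

Definition adjm {m n} (A : 'M[C]_(m, n)) : 'M[C]_(n, m) := (map_mx Num.conj A)^T.

Definition PauliX : 'M[C]_2 := \matrix_(i < 2, j < 2) (i != j)%:R.
Definition PauliZ : 'M[C]_2 :=
  \matrix_(i < 2, j < 2) (if i == j then (if i == 0 :> 'I_2 then 1 else -1) else 0).

(* Hilbert space dimension of 5 qubits (= 32), as produced by the Kronecker product *)
Definition N5 := (2 * (2 * (2 * (2 * 2))))%N.

(* Kronecker product K^(0) ⊗ ... ⊗ K^(4) of five one-qubit operators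
   (qubits are numbered 0..4 here, 1..5 in the paper) *)
Definition kron5 (F : 'I_5 -> 'M[C]_2) : 'M[C]_N5 :=
  F 0 *t (F 1 *t (F 2 *t (F 3 *t F 4))).

Definition on_qubit (i : 'I_5) (P : 'M[C]_2) : 'M[C]_N5 :=
  kron5 (fun j => if j == i then P else 1%:M).

Definition ring_stab (i : 'I_5) : 'M[C]_N5 :=
  on_qubit (i - 1) PauliZ *m on_qubit i PauliX *m on_qubit (i + 1) PauliZ.

Definition proj {n} (v : 'cV[C]_n) : 'M[C]_n := v *m adjm v.

Definition vnorm {n} (v : 'cV[C]_n) : C := sqrtC ((adjm v *m v) 0 0).

Definition psd2 (A : 'M[C]_2) : Prop :=
  adjm A = A /\ forall v : 'cV[C]_2, 0 <= (adjm v *m A *m v) 0 0.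

Definition kraus_apply {n} (K : 'I_n -> 'I_5 -> 'M[C]_2) (rho : 'M[C]_N5) : 'M[C]_N5 :=
  \sum_(i < n) kron5 (K i) *m rho *m adjm (kron5 (K i)).

Definition kraus_TP {n} (K : 'I_n -> 'I_5 -> 'M[C]_2) : Prop :=
  \sum_(i < n) adjm (kron5 (K i)) *m kron5 (K i) = 1%:M.

Definition SEP_transforms (alpha beta : 'cV[C]_N5) : Prop :=
  exists n (K : 'I_n -> 'I_5 -> 'M[C]_2),
    kraus_TP K /\ kraus_apply K (proj alpha) = proj beta.

Definition SEP1_transforms (alpha beta : 'cV[C]_N5) : Prop :=
  exists n (K : 'I_n -> 'I_5 -> 'M[C]_2),
    (forall i j, K i j \in unitmx) /\
    kraus_TP K /\ kraus_apply K (proj alpha) = proj beta.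

End QuantumDefs.

(* Main.v *)
Require Import Defs.
From HB Require Import structures.
From mathcomp Require Import all_boot all_order all_algebra.
From mathcomp Require Import complex mxtens reals.
From mathcomp Require Import ring lra.
Set Implicit Arguments. Unset Strict Implicit. Unset Printing Implicit Defensive.
Import Order.TTheory GRing.Theory Num.Theory.
Local Open Scope ring_scope.

Section Gen.
Variable C : numClosedFieldType.
Local Notation M2 := 'M[C]_2.

Definition m22 (a b c d : C) : M2 :=
  \matrix_(i < 2, j < 2) if i == 0 then (if j == 0 then a else b)
                         else (if j == 0 then c else d).

Lemma ord2P (i : 'I_2) : i = 0 \/ i = 1.
Proof. by case: i => [[|[|//]] ?]; [left|right]; apply/val_inj. Qed.

Lemma sum2 (F : 'I_2 -> C) : \sum_(i < 2) F i = F 0 + F 1.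
Proof. by rewrite !big_ord_recl big_ord0 addr0; congr (_ + F _); apply/val_inj. Qed.

Lemma m22_eta (M : M2) : M = m22 (M 0 0) (M 0 1) (M 1 0) (M 1 1).
Proof.
apply/matrixP => i j; rewrite mxE.
by case: (ord2P i) => ->; case: (ord2P j) => ->.
Qed.

Lemma m22E a b c d :
  (m22 a b c d 0 0 = a) * (m22 a b c d 0 1 = b) *
  (m22 a b c d 1 0 = c) * (m22 a b c d 1 1 = d).
Proof. by rewrite !mxE. Qed.

Lemma m22_eqP a b c d a' b' c' d' :
  a = a' -> b = b' -> c = c' -> d = d' -> m22 a b c d = m22 a' b' c' d'.
Proof. by move=> -> -> -> ->. Qed.

Lemma m22_mul a b c d a' b' c' d' :
  m22 a b c d *m m22 a' b' c' d' =
  m22 (a*a'+b*c') (a*b'+b*d') (c*a'+d*c') (c*b'+d*d').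
Proof.
apply/matrixP => i j; rewrite !mxE !big_ord_recr big_ord0 /= add0r !mxE.
by case: (ord2P i) => ->; case: (ord2P j) => ->.
Qed.

Lemma m22_add a b c d a' b' c' d' :
  m22 a b c d + m22 a' b' c' d' = m22 (a+a') (b+b') (c+c') (d+d').
Proof.
apply/matrixP => i j; rewrite !mxE.
by case: (ord2P i) => ->; case: (ord2P j) => ->.
Qed.

Lemma m22_scale k a b c d : k *: m22 a b c d = m22 (k*a) (k*b) (k*c) (k*d).
Proof.
apply/matrixP => i j; rewrite !mxE.
by case: (ord2P i) => ->; case: (ord2P j) => ->.
Qed.

Lemma m22_opp a b c d : - m22 a b c d = m22 (-a) (-b) (-c) (-d).
Proof.
apply/matrixP => i j; rewrite !mxE.
by case: (ord2P i) => ->; case: (ord2P j) => ->.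
Qed.

Lemma m22_scalar k : k%:M = m22 k 0 0 k :> M2.
Proof.
apply/matrixP => i j; rewrite !mxE.
by case: (ord2P i) => ->; case: (ord2P j) => ->.
Qed.

Lemma m22_1 : 1%:M = m22 1 0 0 1 :> M2.
Proof. exact: m22_scalar. Qed.

Lemma m22_0 : 0 = m22 0 0 0 0 :> M2.
Proof.
apply/matrixP => i j; rewrite !mxE.
by case: (ord2P i) => ->; case: (ord2P j) => ->.
Qed.

Lemma m22_X : PauliX = m22 0 1 1 0 :> M2.
Proof.
apply/matrixP => i j; rewrite !mxE.
by case: (ord2P i) => ->; case: (ord2P j) => ->.
Qed.

Lemma m22_Z : PauliZ = m22 1 0 0 (-1) :> M2.
Proof.
apply/matrixP => i j; rewrite !mxE.
by case: (ord2P i) => ->; case: (ord2P j) => ->.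
Qed.

Lemma m22_adj a b c d : adjm (m22 a b c d) = m22 a^* c^* b^* d^*.
Proof.
apply/matrixP => i j; rewrite !mxE.
by case: (ord2P i) => ->; case: (ord2P j) => ->.
Qed.

Lemma m22_tr a b c d : \tr (m22 a b c d) = a + d.
Proof. by rewrite /mxtrace !big_ord_recr big_ord0 /= add0r !mxE. Qed.

End Gen.

Section Gen.
Variable C : numClosedFieldType.
Local Notation M2 := 'M[C]_2.
Local Notation M32 := 'M[C]_N5.

Lemma adjm_mul m n p (A : 'M[C]_(m,n)) (B : 'M[C]_(n,p)) :
  adjm (A *m B) = adjm B *m adjm A.
Proof. by rewrite /adjm map_mxM trmx_mul. Qed.

Lemma adjmK m n (A : 'M[C]_(m,n)) : adjm (adjm A) = A.
Proof. by apply/matrixP => i j; rewrite !mxE conjCK. Qed.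

Lemma adjmD m n (A B : 'M[C]_(m,n)) : adjm (A + B) = adjm A + adjm B.
Proof. by apply/matrixP => i j; rewrite !mxE rmorphD. Qed.

Lemma adjmZ m n k (A : 'M[C]_(m,n)) : adjm (k *: A) = k^* *: adjm A.
Proof. by apply/matrixP => i j; rewrite !mxE rmorphM. Qed.

Lemma adjm_scalar n k : adjm (k%:M : 'M[C]_n) = (k^*)%:M.
Proof. by rewrite /adjm map_scalar_mx tr_scalar_mx. Qed.

Lemma adjm1 n : adjm (1%:M : 'M[C]_n) = 1%:M.
Proof. by rewrite adjm_scalar rmorph1. Qed.

Lemma tensmxDl m n p q (A B : 'M[C]_(m,n)) (D : 'M[C]_(p,q)) :
  (A + B) *t D = A *t D + B *t D.
Proof. by apply/matrixP => i j; rewrite !mxE mulrDl. Qed.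

Lemma tensmxDr m n p q (A : 'M[C]_(m,n)) (B D : 'M[C]_(p,q)) :
  A *t (B + D) = A *t B + A *t D.
Proof. by apply/matrixP => i j; rewrite !mxE mulrDr. Qed.

Lemma tensmxZl m n p q k (A : 'M[C]_(m,n)) (D : 'M[C]_(p,q)) :
  (k *: A) *t D = k *: (A *t D).
Proof. by apply/matrixP => i j; rewrite !mxE mulrA. Qed.

Lemma tensmxZr m n p q k (A : 'M[C]_(m,n)) (D : 'M[C]_(p,q)) :
  A *t (k *: D) = k *: (A *t D).
Proof. by apply/matrixP => i j; rewrite !mxE mulrCA. Qed.

Lemma tens11 m n : (1%:M : 'M[C]_m) *t (1%:M : 'M[C]_n) = 1%:M.
Proof.
apply/matrixP => i j.
case: (mxtens_indexP i) => i0 i1; case: (mxtens_indexP j) => j0 j1.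
rewrite tensmxE !mxE (inj_eq (can_inj (@mxtens_indexK m n))) xpair_eqE.
by case: (i0 == j0); case: (i1 == j1); rewrite /= ?mulr1 ?mulr0 ?mul0r.
Qed.

Lemma adjm_tens m n p q (A : 'M[C]_(m,n)) (B : 'M[C]_(p,q)) :
  adjm (A *t B) = adjm A *t adjm B.
Proof. by apply/matrixP => i j; rewrite !mxE rmorphM. Qed.

Lemma tr_tens m n (A : 'M[C]_m) (B : 'M[C]_n) : \tr (A *t B) = \tr A * \tr B.
Proof. by rewrite /mxtrace mulr_sum; apply: eq_bigr => k _; rewrite mxE. Qed.

Definition k5 (a b c d e : M2) : M32 := a *t (b *t (c *t (d *t e))).

Lemma kron5E (F : 'I_5 -> M2) : kron5 F = k5 (F 0) (F 1) (F 2) (F 3) (F 4).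
Proof. by []. Qed.

Lemma k5_mul a b c d e a' b' c' d' e' :
  k5 a b c d e *m k5 a' b' c' d' e' = k5 (a *m a') (b *m b') (c *m c') (d *m d') (e *m e').
Proof. by rewrite /k5 !tensmx_mul. Qed.

Lemma k5_adj a b c d e : adjm (k5 a b c d e) = k5 (adjm a) (adjm b) (adjm c) (adjm d) (adjm e).
Proof. by rewrite /k5 !adjm_tens. Qed.

Lemma k5_1 : k5 1%:M 1%:M 1%:M 1%:M 1%:M = 1%:M.
Proof. by rewrite /k5 !tens11. Qed.

Lemma k5_tr a b c d e : \tr (k5 a b c d e) = \tr a * \tr b * \tr c * \tr d * \tr e.
Proof. by rewrite /k5 !tr_tens !mulrA. Qed.

Lemma k5_Z0 k a b c d e : k5 (k *: a) b c d e = k *: k5 a b c d e.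
Proof. by rewrite /k5 !(tensmxZl, tensmxZr). Qed.
Lemma k5_Z1 k a b c d e : k5 a (k *: b) c d e = k *: k5 a b c d e.
Proof. by rewrite /k5 !(tensmxZl, tensmxZr). Qed.
Lemma k5_Z2 k a b c d e : k5 a b (k *: c) d e = k *: k5 a b c d e.
Proof. by rewrite /k5 !(tensmxZl, tensmxZr). Qed.
Lemma k5_Z3 k a b c d e : k5 a b c (k *: d) e = k *: k5 a b c d e.
Proof. by rewrite /k5 !(tensmxZl, tensmxZr). Qed.
Lemma k5_Z4 k a b c d e : k5 a b c d (k *: e) = k *: k5 a b c d e.
Proof. by rewrite /k5 !(tensmxZl, tensmxZr). Qed.

Lemma k5_D0 a a' b c d e : k5 (a + a') b c d e = k5 a b c d e + k5 a' b c d e.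
Proof. by rewrite /k5 !(tensmxDl, tensmxDr). Qed.
Lemma k5_D1 a b b' c d e : k5 a (b + b') c d e = k5 a b c d e + k5 a b' c d e.
Proof. by rewrite /k5 !(tensmxDl, tensmxDr). Qed.
Lemma k5_D2 a b c c' d e : k5 a b (c + c') d e = k5 a b c d e + k5 a b c' d e.
Proof. by rewrite /k5 !(tensmxDl, tensmxDr). Qed.
Lemma k5_D3 a b c d d' e : k5 a b c (d + d') e = k5 a b c d e + k5 a b c d' e.
Proof. by rewrite /k5 !(tensmxDl, tensmxDr). Qed.
Lemma k5_D4 a b c d e e' : k5 a b c d (e + e') = k5 a b c d e + k5 a b c d e'.
Proof. by rewrite /k5 !(tensmxDl, tensmxDr). Qed.

Lemma k5_N0 a b c d e : k5 (- a) b c d e = - k5 a b c d e :> M32.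
Proof. by rewrite -scaleN1r k5_Z0 scaleN1r. Qed.

Lemma k5_N1 a b c d e : k5 a (- b) c d e = - k5 a b c d e :> M32.
Proof. by rewrite -scaleN1r k5_Z1 scaleN1r. Qed.
Lemma k5_N2 a b c d e : k5 a b (- c) d e = - k5 a b c d e :> M32.
Proof. by rewrite -scaleN1r k5_Z2 scaleN1r. Qed.
Lemma k5_N3 a b c d e : k5 a b c (- d) e = - k5 a b c d e :> M32.
Proof. by rewrite -scaleN1r k5_Z3 scaleN1r. Qed.
Lemma k5_N4 a b c d e : k5 a b c d (- e) = - k5 a b c d e :> M32.
Proof. by rewrite -scaleN1r k5_Z4 scaleN1r. Qed.

End Gen.

Ltac m22n := rewrite ?m22_X ?m22_Z ?m22_1 ?m22_0 ?m22_scalar;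
  rewrite ?(m22_adj, m22_mul, m22_add, m22_scale, m22_opp,
             rmorph0, rmorph1, rmorphN, rmorphN1).
Ltac m22s := m22n; apply: m22_eqP; ring.
Ltac m22f := m22n; apply: m22_eqP; field; try done.
Ltac k5anti := rewrite ?k5_mul;
  first [ rewrite -k5_N0; congr k5; m22s
        | rewrite -k5_N1; congr k5; m22s
        | rewrite -k5_N2; congr k5; m22s
        | rewrite -k5_N3; congr k5; m22s
        | rewrite -k5_N4; congr k5; m22s ].
Ltac k5eq := rewrite ?k5_mul; congr k5; m22s.

Section Alg.
Variable C : numClosedFieldType.
Variable n : nat.
Local Notation M := 'M[C]_n.

Lemma expand3 (Q0 Q1 Q2 : M) s0 s1 s2 :
  (1%:M + s0 *: Q0) *m (1%:M + s1 *: Q1) *m (1%:M + s2 *: Q2) =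
  1%:M + s0 *: Q0 + s1 *: Q1 + s2 *: Q2 + (s0 * s1) *: (Q0 *m Q1)
  + (s0 * s2) *: (Q0 *m Q2) + (s1 * s2) *: (Q1 *m Q2)
  + (s0 * s1 * s2) *: (Q0 *m Q1 *m Q2).
Proof.
rewrite !mulmxDl !mulmxDr !mul1mx !mulmx1 !mulmxDl !mul1mx.
rewrite -!scalemxAl -!scalemxAr -!scalemxAl !scalerA.
apply/matrixP => i j; rewrite !mxE; ring.
Qed.

Lemma comm1 (Q R : M) s t : Q *m R = R *m Q ->
  (1%:M + s *: Q) *m (1%:M + t *: R) = (1%:M + t *: R) *m (1%:M + s *: Q).
Proof.
move=> QR; rewrite !mulmxDl !mulmxDr !mul1mx !mulmx1.
rewrite -!scalemxAl -!scalemxAr !scalerA QR mulrC.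
apply/matrixP => i j; rewrite !mxE; ring.
Qed.

Lemma transfer3 (Q0 Q1 Q2 R0 R1 R2 : M) (v : 'cV[C]_n) s0 s1 s2 :
  Q0 *m v = R0 *m v -> Q1 *m v = R1 *m v -> Q2 *m v = R2 *m v ->
  Q0 *m R1 = R1 *m Q0 -> Q0 *m R2 = R2 *m Q0 -> Q1 *m R2 = R2 *m Q1 ->
  (1%:M + s0 *: Q0) *m (1%:M + s1 *: Q1) *m (1%:M + s2 *: Q2) *m v =
  (1%:M + s2 *: R2) *m (1%:M + s1 *: R1) *m (1%:M + s0 *: R0) *m v.
Proof.
move=> e0 e1 e2 c01 c02 c12.
have t : forall (Q R : M), Q *m v = R *m v -> forall s,
    (1%:M + s *: Q) *m v = (1%:M + s *: R) *m v.
  by move=> Q R e s; rewrite !mulmxDl -!scalemxAl e.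
set A0 := 1%:M + s0 *: Q0; set A1 := 1%:M + s1 *: Q1; set A2 := 1%:M + s2 *: Q2.
set B0 := 1%:M + s0 *: R0; set B1 := 1%:M + s1 *: R1; set B2 := 1%:M + s2 *: R2.
have h2 : A2 *m v = B2 *m v by apply: t.
have h1 : A1 *m v = B1 *m v by apply: t.
have h0 : A0 *m v = B0 *m v by apply: t.
have c12' : A1 *m B2 = B2 *m A1 by apply: comm1.
have c02' : A0 *m B2 = B2 *m A0 by apply: comm1.
have c01' : A0 *m B1 = B1 *m A0 by apply: comm1.
rewrite -!mulmxA h2 (mulmxA A1) c12' -(mulmxA B2) h1.
rewrite !mulmxA c02' -(mulmxA B2 A0) c01' -!mulmxA h0.
done.
Qed.

End Alg.

Section Psi.
Variable C : numClosedFieldType.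
Variable psi : 'cV[C]_N5.
Local Notation M32 := 'M[C]_N5.

Definition ev (A : M32) := (adjm psi *m A *m psi) 0 0.

Lemma evD A B : ev (A + B) = ev A + ev B.
Proof. by rewrite /ev mulmxDr mulmxDl mxE. Qed.

Lemma evZ k A : ev (k *: A) = k * ev A.
Proof. by rewrite /ev -scalemxAr -scalemxAl mxE. Qed.

Lemma adjm_fix (S : M32) : S *m psi = psi -> adjm S = S -> adjm psi *m S = adjm psi.
Proof. by move=> Sp Sa; rewrite -{1}Sa -adjm_mul Sp. Qed.

Lemma ev_anti Q S : S *m psi = psi -> adjm S = S -> Q *m S = - (S *m Q) -> ev Q = 0.
Proof.
move=> Sp Sa QS.
have e1 : ev Q = (adjm psi *m (Q *m S) *m psi) 0 0 by rewrite /ev -!mulmxA Sp.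
move: e1; rewrite QS mulmxN mulNmx mulmxA (adjm_fix Sp Sa) mxE -/(ev Q).
by move/eqP; rewrite eq_sym eqNr => /eqP.
Qed.

Lemma ev_expand (Q0 Q1 Q2 : M32) s0 s1 s2 :
  (adjm psi *m psi) 0 0 = 1 ->
  ev Q0 = 0 -> ev Q1 = 0 -> ev Q2 = 0 ->
  ev (Q0 *m Q1) = 0 -> ev (Q0 *m Q2) = 0 -> ev (Q1 *m Q2) = 0 ->
  Q0 *m Q1 *m Q2 *m psi = psi ->
  ev ((1%:M + s0 *: Q0) *m (1%:M + s1 *: Q1) *m (1%:M + s2 *: Q2)) = 1 + s0 * s1 * s2.
Proof.
move=> pu z0 z1 z2 z01 z02 z12 T.
rewrite expand3 !evD !evZ z0 z1 z2 z01 z02 z12.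
have -> : ev 1%:M = 1 by rewrite /ev mulmx1.
have -> : ev (Q0 *m Q1 *m Q2) = 1 by rewrite /ev -mulmxA T.
ring.
Qed.

Lemma vec (Q0 Q1 Q2 R0 R1 R2 T G Gi : M32) c s0 s1 s2 :
  (adjm psi *m psi) 0 0 = 1 ->
  Q0 *m psi = R0 *m psi -> Q1 *m psi = R1 *m psi -> Q2 *m psi = R2 *m psi ->
  Q0 *m R1 = R1 *m Q0 -> Q0 *m R2 = R2 *m Q0 -> Q1 *m R2 = R2 *m Q1 ->
  ev Q0 = 0 -> ev Q1 = 0 -> ev Q2 = 0 ->
  ev (Q0 *m Q1) = 0 -> ev (Q0 *m Q2) = 0 -> ev (Q1 *m Q2) = 0 ->
  T = Q0 *m Q1 *m Q2 -> T *m psi = psi ->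
  Gi *m G = 1%:M -> G *m psi = c *: psi ->
  T *m (G *m R0 *m Gi) = (G *m R0 *m Gi) *m T ->
  T *m (G *m R1 *m Gi) = (G *m R1 *m Gi) *m T ->
  T *m (G *m R2 *m Gi) = (G *m R2 *m Gi) *m T ->
  s0 * s1 * s2 = 1 ->
  T *m (G *m ((1%:M + s0 *: Q0) *m (1%:M + s1 *: Q1) *m (1%:M + s2 *: Q2)) *m psi)
    = G *m ((1%:M + s0 *: Q0) *m (1%:M + s1 *: Q1) *m (1%:M + s2 *: Q2)) *m psi
  /\ G *m ((1%:M + s0 *: Q0) *m (1%:M + s1 *: Q1) *m (1%:M + s2 *: Q2)) *m psi != 0.
Proof.
move=> pu e0 e1 e2 c01 c02 c12 z0 z1 z2 z01 z02 z12 TQ Tp GiG Gp t0 t1 t2 ss.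
split; last first.
  apply/eqP => H.
  have : ev ((1%:M + s0 *: Q0) *m (1%:M + s1 *: Q1) *m (1%:M + s2 *: Q2)) = 0.
    rewrite /ev -mulmxA.
    set P := (1%:M + s0 *: Q0) *m _ *m _.
    have -> : P *m psi = Gi *m (G *m P *m psi) by rewrite !mulmxA GiG mul1mx.
    by rewrite H !mulmx0 mxE.
  rewrite ev_expand // -?TQ // ss => /eqP.
  by rewrite -[1 + 1]/(1 *+ 2) pnatr_eq0.
have hP := transfer3 s0 s1 s2 e0 e1 e2 c01 c02 c12.
rewrite -[G *m _ *m psi]mulmxA hP.
have GB : forall (R : M32) s, G *m (1%:M + s *: R) = (1%:M + s *: (G *m R *m Gi)) *m G.
  move=> R s; rewrite mulmxDr mulmxDl mulmx1 mul1mx -scalemxAl -scalemxAr.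
  by rewrite -!mulmxA GiG mulmx1.
have TB : forall (R : M32) s, T *m (G *m R *m Gi) = (G *m R *m Gi) *m T ->
    T *m (1%:M + s *: (G *m R *m Gi)) = (1%:M + s *: (G *m R *m Gi)) *m T.
  move=> R s H; rewrite mulmxDr mulmxDl mulmx1 mul1mx -scalemxAl -scalemxAr H.
  by [].
set B2 := 1%:M + s2 *: (G *m R2 *m Gi).
set B1 := 1%:M + s1 *: (G *m R1 *m Gi).
set B0 := 1%:M + s0 *: (G *m R0 *m Gi).
have GN : G *m ((1%:M + s2 *: R2) *m (1%:M + s1 *: R1) *m (1%:M + s0 *: R0))
          = B2 *m B1 *m B0 *m G.
  rewrite !mulmxA (GB R2 s2) -(mulmxA _ G) (GB R1 s1) !mulmxA.
  by rewrite -(mulmxA _ G) (GB R0 s0) !mulmxA.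
have TN : T *m (B2 *m B1 *m B0) = B2 *m B1 *m B0 *m T.
  rewrite !mulmxA (TB R2 s2 t2) -(mulmxA _ T) (TB R1 s1 t1) !mulmxA.
  by rewrite -(mulmxA _ T) (TB R0 s0 t0) !mulmxA.
rewrite (mulmxA G) GN -(mulmxA _ G) Gp -!scalemxAr.
by rewrite mulmxA TN -(mulmxA _ T) Tp.
Qed.

End Psi.

Section Eig.
Variable C : numClosedFieldType.
Local Notation M2 := 'M[C]_2.
Local Notation M32 := 'M[C]_N5.

Definition upd (F : 'I_5 -> M2) (j0 : 'I_5) (M : M2) : 'I_5 -> M2 :=
  fun j => if j == j0 then M else F j.

Lemma kron5_ext (F G : 'I_5 -> M2) : (forall j, F j = G j) -> kron5 F = kron5 G.
Proof. by move=> e; rewrite !kron5E !e. Qed.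

Lemma kron5_mul (F G : 'I_5 -> M2) :
  kron5 F *m kron5 G = kron5 (fun j => F j *m G j).
Proof. by rewrite !kron5E k5_mul. Qed.

Lemma ord5P (j : 'I_5) : j = 0 \/ j = 1 \/ j = 2 \/ j = 3 \/ j = 4.
Proof.
case: j => [[|[|[|[|[|//]]]]] p].
- by left; apply/val_inj.
- by right; left; apply/val_inj.
- by right; right; left; apply/val_inj.
- by right; right; right; left; apply/val_inj.
- by right; right; right; right; apply/val_inj.
Qed.

Lemma kron5_updZ F j0 k M : kron5 (upd F j0 (k *: M)) = k *: kron5 (upd F j0 M).
Proof.
rewrite !kron5E /upd.
by case: (ord5P j0) => [->|[->|[->|[->|->]]]]; rewrite /= ?k5_Z0 ?k5_Z1 ?k5_Z2 ?k5_Z3 ?k5_Z4.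
Qed.

Lemma kron5_upd0 F j0 : kron5 (upd F j0 0) = 0.
Proof. by rewrite -(scale0r (0 : M2)) kron5_updZ scale0r. Qed.

Lemma eig (w : 'cV[C]_N5) (t y : 'I_5 -> M2) j0 (x : 'cV[C]_2) (v : 'rV[C]_2) :
  (forall j, t j *m t j = 1%:M) ->
  kron5 (fun j => t j *m y j) *m w = kron5 y *m w ->
  kron5 y *m w != 0 ->
  y j0 = x *m v ->
  x 1 0 * (t j0 *m x) 0 0 - x 0 0 * (t j0 *m x) 1 0 = 0.
Proof.
move=> tt Heq Hnz yx.
set zt := x 1 0 * (t j0 *m x) 0 0 - x 0 0 * (t j0 *m x) 1 0.
pose L := m22 (x 1 0) (- x 0 0) 0 0.
pose e0 : 'cV[C]_2 := \col_i ((i == 0)%:R).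
have Lx : L *m x = 0.
  apply/matrixP => i j; rewrite [j]ord1 !mxE sum2 !mxE.
  by case: (ord2P i) => -> /=; ring.
have Ltx : L *m (t j0 *m x) = zt *: e0.
  rewrite /zt; move: (t j0 *m x) => tx.
  apply/matrixP => i j; rewrite [j]ord1 !mxE sum2 !mxE.
  by case: (ord2P i) => -> /=; ring.
have e0e0 : e0^T *m e0 = 1%:M.
  apply/matrixP => k l; rewrite [k]ord1 [l]ord1 !mxE sum2 !mxE /=; ring.
have H1 := congr1 (mulmx (kron5 (upd t j0 L))) Heq.
rewrite !mulmxA !kron5_mul in H1.
have E1 : kron5 (fun j => upd t j0 L j *m (t j *m y j))
          = kron5 (upd y j0 (zt *: (e0 *m v))).
  apply: kron5_ext => j; rewrite /upd; case: eqP => [->|_].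
    by rewrite yx !mulmxA -(mulmxA L) Ltx scalemxAl.
  by rewrite mulmxA tt mul1mx.
have E2 : kron5 (fun j => upd t j0 L j *m y j)
          = kron5 (upd (fun j => t j *m y j) j0 0).
  apply: kron5_ext => j; rewrite /upd; case: eqP => [->|_] //.
  by rewrite yx mulmxA Lx mul0mx.
rewrite E1 E2 kron5_upd0 mul0mx kron5_updZ -scalemxAl in H1.
have E3 : kron5 y = kron5 (upd (fun=> 1%:M) j0 (x *m e0^T)) *m kron5 (upd y j0 (e0 *m v)).
  rewrite kron5_mul; apply: kron5_ext => j; rewrite /upd; case: eqP => [->|_].
    by rewrite yx mulmxA -(mulmxA x) e0e0 mulmx1.
  by rewrite mul1mx.
move/eqP: H1; rewrite scalemx_eq0 => /orP [/eqP //|/eqP W0].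
by move: Hnz; rewrite E3 -mulmxA W0 mulmx0 eqxx.
Qed.



Lemma kron5_1 : kron5 (fun _ => 1%:M : M2) = 1%:M.
Proof. by rewrite kron5E k5_1. Qed.

Lemma comm_disj (t r g : 'I_5 -> M2) : (forall j, g j \in unitmx) ->
  (forall j, t j = 1%:M \/ r j = 1%:M) ->
  kron5 t *m (kron5 g *m kron5 r *m kron5 (fun j => invmx (g j)))
  = (kron5 g *m kron5 r *m kron5 (fun j => invmx (g j))) *m kron5 t.
Proof.
move=> U D; rewrite !kron5_mul; apply: kron5_ext => j.
case: (D j) => ->; first by rewrite mul1mx mulmx1.
by rewrite mulmx1 mulmxV // mul1mx mulmx1.
Qed.

Lemma kron5_inv (g : 'I_5 -> M2) : (forall j, g j \in unitmx) ->
  kron5 (fun j => invmx (g j)) *m kron5 g = 1%:M.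
Proof.
move=> U; rewrite kron5_mul -kron5_1; apply: kron5_ext => j.
by rewrite mulVmx.
Qed.

Section Wrap.
Variable w : 'cV[C]_N5.
Variables (t y : 'I_5 -> M2) (j0 : 'I_5) (g : M2).
Hypothesis tt : forall j, t j *m t j = 1%:M.
Hypothesis Heq : kron5 (fun j => t j *m y j) *m w = kron5 y *m w.
Hypothesis Hnz : kron5 y *m w != 0.

Let col2 (a b : C) : 'cV[C]_2 := \col_i (if i == 0 then a else b).
Let row2 (a b : C) : 'rV[C]_2 := \row_i (if i == 0 then a else b).

Let rk (a b c d : C) : col2 a b *m row2 c d = m22 (a * c) (a * d) (b * c) (b * d).
Proof.
apply/matrixP => i j; rewrite !mxE big_ord1 !mxE.
by case: (ord2P i) => ->; case: (ord2P j) => ->.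
Qed.

Let gx (a b : C) i : (g *m col2 a b) i 0 = g i 0 * a + g i 1 * b.
Proof. by rewrite !mxE sum2 !mxE. Qed.

Lemma eig_Zp : t j0 = PauliZ -> y j0 = g *m (1%:M + 1 *: PauliZ) -> g 0 0 * g 1 0 = 0.
Proof.
move=> tj yj.
have yj' : y j0 = (g *m col2 1 0) *m row2 2 0.
  rewrite yj -mulmxA rk; congr (_ *m _).
  rewrite m22_1 ?m22_X ?m22_Z m22_scale m22_add; apply: m22_eqP; ring.
have := eig tt Heq Hnz yj'; rewrite tj ?m22_X ?m22_Z.
rewrite !mxE !sum2 !mxE !sum2 !mxE /=.
move=> E; have : 2 * (g 0 0 * g 1 0) = 0 by rewrite -[RHS]E; ring.
by move/eqP; rewrite mulf_eq0 pnatr_eq0 /= => /eqP.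
Qed.

Lemma eig_Zm : t j0 = PauliZ -> y j0 = g *m (1%:M + (-1) *: PauliZ) -> g 0 1 * g 1 1 = 0.
Proof.
move=> tj yj.
have yj' : y j0 = (g *m col2 0 1) *m row2 0 2.
  rewrite yj -mulmxA rk; congr (_ *m _).
  rewrite m22_1 ?m22_X ?m22_Z m22_scale m22_add; apply: m22_eqP; ring.
have := eig tt Heq Hnz yj'; rewrite tj ?m22_X ?m22_Z.
rewrite !mxE !sum2 !mxE !sum2 !mxE /=.
move=> E; have : 2 * (g 0 1 * g 1 1) = 0 by rewrite -[RHS]E; ring.
by move/eqP; rewrite mulf_eq0 pnatr_eq0 /= => /eqP.
Qed.

Lemma eig_Xp : t j0 = PauliX -> y j0 = g *m (1%:M + 1 *: PauliX) -> (g 0 0 + g 0 1)^+2 = (g 1 0 + g 1 1)^+2.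
Proof.
move=> tj yj.
have yj' : y j0 = (g *m col2 1 1) *m row2 1 1.
  rewrite yj -mulmxA rk; congr (_ *m _).
  rewrite m22_1 ?m22_X ?m22_Z m22_scale m22_add; apply: m22_eqP; ring.
have := eig tt Heq Hnz yj'; rewrite tj ?m22_X ?m22_Z.
rewrite !mxE !sum2 !mxE !sum2 !mxE /=.
move=> E; apply/eqP; rewrite eq_sym -subr_eq0; apply/eqP; rewrite -[RHS]E; ring.
Qed.

Lemma eig_Xm : t j0 = PauliX -> y j0 = g *m (1%:M + (-1) *: PauliX) -> (g 0 0 - g 0 1)^+2 = (g 1 0 - g 1 1)^+2.
Proof.
move=> tj yj.
have yj' : y j0 = (g *m col2 1 (-1)) *m row2 1 (-1).
  rewrite yj -mulmxA rk; congr (_ *m _).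
  rewrite m22_1 ?m22_X ?m22_Z m22_scale m22_add; apply: m22_eqP; ring.
have := eig tt Heq Hnz yj'; rewrite tj ?m22_X ?m22_Z.
rewrite !mxE !sum2 !mxE !sum2 !mxE /=.
move=> E; apply/eqP; rewrite eq_sym -subr_eq0; apply/eqP; rewrite -[RHS]E; ring.
Qed.

End Wrap.
End Eig.


Section P2.
Variable C : numClosedFieldType.
Local Notation M2 := 'M[C]_2.

Lemma m22_unit (p q r s : C) : m22 p q r s \in unitmx -> p * s - q * r != 0.
Proof.
move=> U; apply/eqP => D.
have H : m22 s (-q) (-r) p *m m22 p q r s = 0.
  rewrite m22_mul m22_0; apply: m22_eqP.
  - by rewrite mulrC -D; ring.
  - ring.
  - ring.
  - by rewrite -D; ring.
have H2 : m22 s (-q) (-r) p = 0.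
  by rewrite -[LHS]mulmx1 -(mulmxV U) mulmxA H mul0mx.
have E : forall i j, m22 s (-q) (-r) p i j = 0 by move=> i j; rewrite H2 mxE.
have := E 0 0; have := E 0 1; have := E 1 0; have := E 1 1; rewrite !m22E.
move=> ep /eqP; rewrite oppr_eq0 => /eqP er /eqP; rewrite oppr_eq0 => /eqP eq es.
move: U; rewrite ep er eq es -m22_0 => U.
have := mulmxV U; rewrite mul0mx => /matrixP/(_ 0 0); rewrite !mxE /=.
by move/eqP; rewrite eq_sym oner_eq0.
Qed.

Lemma pauli2 (a : C) (g sig : M2) : 0 < a -> (sig = PauliZ \/ sig = PauliX) ->
  g \in unitmx ->
  g 0 0 * g 1 0 = 0 -> g 0 1 * g 1 1 = 0 ->
  (g 0 0 + g 0 1)^+2 = (g 1 0 + g 1 1)^+2 -> (g 0 0 - g 0 1)^+2 = (g 1 0 - g 1 1)^+2 ->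
  exists e l, (e = 1 \/ e = -1) /\ 0 < l /\ g *m sig = e *: (sig *m g) /\
     \tr (adjm g *m ((2^-1)%:M + a *: sig) *m g *m sig) = e * l.
Proof.
move=> a0 hs.
have [p [q [r [s ->]]]] : exists p q r s, g = m22 p q r s.
  by exists (g 0 0), (g 0 1), (g 1 0), (g 1 1); exact: m22_eta.
rewrite !m22E => /m22_unit U prz qsz c1 _.
have two0 : (0 : C) < 2 by rewrite ltr0n.
move/eqP: prz; rewrite mulf_eq0 => /orP [/eqP p0 | /eqP r0].
-
  rewrite p0 in U c1 *.
  have q0 : q != 0 by apply: contraNneq U => ->; rewrite !mul0r subr0.
  have s0 : s = 0.
    by move/eqP: qsz; rewrite mulf_eq0 (negbTE q0) /= => /eqP.
  rewrite s0 !add0r addr0 in c1 *.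
  have lp : 0 < 2 * a * (q * q^*) by apply: mulr_gt0; [apply: mulr_gt0 | rewrite mul_conjC_gt0].
  move/eqP: c1; rewrite eq_sym eqf_sqr => /orP [/eqP -> | /eqP ->].
  + case: hs => ->.
    * exists (-1), (2 * a * (q * q^*)); split; [by right|split=> //; split].
        by m22s.
      by m22n; rewrite m22_tr; ring.
    * exists 1, (2 * a * (q * q^*)); split; [by left|split=> //; split].
        by m22s.
      by m22n; rewrite m22_tr; ring.
  + case: hs => ->.
    * exists (-1), (2 * a * (q * q^*)); split; [by right|split=> //; split].
        by m22s.
      by m22n; rewrite m22_tr; ring.
    * exists (-1), (2 * a * (q * q^*)); split; [by right|split=> //; split].
        by m22s.
      by m22n; rewrite m22_tr; ring.
-
  rewrite r0 in U c1 *.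
  have s0 : s != 0 by apply: contraNneq U => ->; rewrite !mulr0 subrr.
  have p0 : p != 0 by apply: contraNneq U => ->; rewrite mul0r mulr0 subrr.
  have q0 : q = 0.
    by move/eqP: qsz; rewrite mulf_eq0 (negbTE s0) orbF => /eqP.
  rewrite q0 !add0r addr0 in c1 *.
  have lp : 0 < 2 * a * (p * p^*) by apply: mulr_gt0; [apply: mulr_gt0 | rewrite mul_conjC_gt0].
  move/eqP: c1; rewrite eq_sym eqf_sqr => /orP [/eqP -> | /eqP ->].
  + case: hs => ->.
    * exists 1, (2 * a * (p * p^*)); split; [by left|split=> //; split].
        by m22s.
      by m22n; rewrite m22_tr; ring.
    * exists 1, (2 * a * (p * p^*)); split; [by left|split=> //; split].
        by m22s.
      by m22n; rewrite m22_tr; ring.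
  + case: hs => ->.
    * exists 1, (2 * a * (p * p^*)); split; [by left|split=> //; split].
        by m22s.
      by m22n; rewrite m22_tr; ring.
    * exists (-1), (2 * a * (p * p^*)); split; [by right|split=> //; split].
        by m22s.
      by m22n; rewrite m22_tr; ring.
Qed.

End P2.


Section Gen.
Variable C : numClosedFieldType.
Local Notation M2 := 'M[C]_2.
Local Notation M32 := 'M[C]_N5.
Local Notation X := (PauliX : M2).
Local Notation Z := (PauliZ : M2).
Local Notation I := (1%:M : M2).

Definition L5 (a b c d e : M2) : 'I_5 -> M2 :=
  fun j => match nat_of_ord j with 0 => a | 1 => b | 2 => c | 3 => d | _ => e end.

Lemma k5_L5 (a b c d e : M2) : k5 a b c d e = kron5 (L5 a b c d e).
Proof. by []. Qed.

Lemma rs0 : ring_stab 0 = k5 X Z I I Z :> M32.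
Proof. by rewrite /ring_stab /on_qubit !kron5E !k5_mul /= !mul1mx !mulmx1. Qed.
Lemma rs1 : ring_stab 1 = k5 Z X Z I I :> M32.
Proof. by rewrite /ring_stab /on_qubit !kron5E !k5_mul /= !mul1mx !mulmx1. Qed.
Lemma rs2 : ring_stab 2 = k5 I Z X Z I :> M32.
Proof. by rewrite /ring_stab /on_qubit !kron5E !k5_mul /= !mul1mx !mulmx1. Qed.
Lemma rs3 : ring_stab 3 = k5 I I Z X Z :> M32.
Proof. by rewrite /ring_stab /on_qubit !kron5E !k5_mul /= !mul1mx !mulmx1. Qed.
Lemma rs4 : ring_stab 4 = k5 Z I I Z X :> M32.
Proof. by rewrite /ring_stab /on_qubit !kron5E !k5_mul /= !mul1mx !mulmx1. Qed.

Lemma herm_k5 (a b c d e : M2) : adjm a = a -> adjm b = b -> adjm c = c -> adjm d = d ->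
  adjm e = e -> adjm (k5 a b c d e) = k5 a b c d e.
Proof. by move=> ha hb hc hd he; rewrite k5_adj ha hb hc hd he. Qed.

Lemma hX : adjm X = X. Proof. by m22s. Qed.
Lemma hZ : adjm Z = Z. Proof. by m22s. Qed.
Lemma hI : adjm I = I. Proof. exact: adjm1. Qed.

Ltac herm := apply: herm_k5; first [exact: hX | exact: hZ | exact: hI].

Section Psi.
Variable psi : 'cV[C]_N5.
Hypothesis pu : (adjm psi *m psi) 0 0 = 1.
Hypothesis ps : forall i, ring_stab i *m psi = psi.

Lemma sA0 : k5 X Z I I Z *m psi = psi. Proof. by rewrite -rs0 ps. Qed.
Lemma sA1 : k5 Z X Z I I *m psi = psi. Proof. by rewrite -rs1 ps. Qed.
Lemma sA2 : k5 I Z X Z I *m psi = psi. Proof. by rewrite -rs2 ps. Qed.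
Lemma sA3 : k5 I I Z X Z *m psi = psi. Proof. by rewrite -rs3 ps. Qed.
Lemma sA4 : k5 Z I I Z X *m psi = psi. Proof. by rewrite -rs4 ps. Qed.

Ltac zev S sS := apply: (@ev_anti _ psi _ S); [exact: sS | herm | k5anti].

Lemma B1_zero :
  ev psi (k5 Z I I I I) = 0 /\ ev psi (k5 I X I I I) = 0 /\ ev psi (k5 I I Z I I) = 0 /\
  ev psi (k5 Z I I I I *m k5 I X I I I) = 0 /\
  ev psi (k5 Z I I I I *m k5 I I Z I I) = 0 /\
  ev psi (k5 I X I I I *m k5 I I Z I I) = 0.
Proof.
do !split.
- zev (k5 X Z I I Z) sA0.
- zev (k5 X Z I I Z) sA0.
- zev (k5 I Z X Z I) sA2.
- zev (k5 I Z X Z I) sA2.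
- zev (k5 X Z I I Z) sA0.
- zev (k5 X Z I I Z) sA0.
Qed.

Lemma B1_prod s0 s1 s2 :
  (1%:M + s0 *: k5 Z I I I I) *m (1%:M + s1 *: k5 I X I I I) *m (1%:M + s2 *: k5 I I Z I I)
  = k5 (I + s0 *: Z) (I + s1 *: X) (I + s2 *: Z) I I :> M32.
Proof.
rewrite -k5_1 -k5_Z0 -k5_D0 -k5_Z1 -k5_D1 -k5_Z2 -k5_D2 !k5_mul.
by rewrite !mul1mx !mulmx1.
Qed.

Ltac disj := let j := fresh "j" in move=> j; case: (ord5P j) => [->|[->|[->|[->|->]]]] /=; by [left|right].
Ltac ttac := let j := fresh "j" in move=> j; case: (ord5P j) => [->|[->|[->|[->|->]]]] /=; m22s.

Lemma B1_conds (g : 'I_5 -> M2) c : (forall j, g j \in unitmx) ->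
  kron5 g *m psi = c *: psi ->
  (g 0) 0 0 * (g 0) 1 0 = 0 /\ (g 0) 0 1 * (g 0) 1 1 = 0 /\
  ((g 1) 0 0 + (g 1) 0 1)^+2 = ((g 1) 1 0 + (g 1) 1 1)^+2 /\
  ((g 1) 0 0 - (g 1) 0 1)^+2 = ((g 1) 1 0 - (g 1) 1 1)^+2 /\
  (g 2) 0 0 * (g 2) 1 0 = 0 /\ (g 2) 0 1 * (g 2) 1 1 = 0.
Proof.
move=> U Gp.
have [z0 [z1 [z2 [z01 [z02 z12]]]]] := B1_zero.
pose t := L5 Z X Z I I.
have tt : forall j, t j *m t j = 1%:M by rewrite /t; ttac.
have e0 : k5 Z I I I I *m psi = k5 I I I Z X *m psi.
  by rewrite -{1}sA4 mulmxA; congr (_ *m _); k5eq.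
have sS : k5 Z X Z I I *m k5 I I Z X Z *m k5 Z I I Z X *m psi = psi.
  by rewrite -!mulmxA sA4 sA3 sA1.
have e1 : k5 I X I I I *m psi = k5 I I I (X *m Z) (Z *m X) *m psi.
  by rewrite -{1}sS !mulmxA; congr (_ *m _); k5eq.
have e2 : k5 I I Z I I *m psi = k5 I I I X Z *m psi.
  by rewrite -{1}sA3 mulmxA; congr (_ *m _); k5eq.
have c01 : k5 Z I I I I *m k5 I I I (X *m Z) (Z *m X) = k5 I I I (X *m Z) (Z *m X) *m k5 Z I I I I.
  by k5eq.
have c02 : k5 Z I I I I *m k5 I I I X Z = k5 I I I X Z *m k5 Z I I I I by k5eq.
have c12 : k5 I X I I I *m k5 I I I X Z = k5 I I I X Z *m k5 I X I I I by k5eq.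
have TQ : k5 Z X Z I I = k5 Z I I I I *m k5 I X I I I *m k5 I I Z I I :> M32 by k5eq.
have GiG := kron5_inv U.
have t0 := comm_disj (t:=L5 Z X Z I I) (r:=L5 I I I Z X) U ltac:(disj).
have t1 := comm_disj (t:=L5 Z X Z I I) (r:=L5 I I I (X *m Z) (Z *m X)) U ltac:(disj).
have t2 := comm_disj (t:=L5 Z X Z I I) (r:=L5 I I I X Z) U ltac:(disj).
have key : forall s0 s1 s2, s0 * s1 * s2 = 1 ->
   let y := fun j => g j *m L5 (I + s0 *: Z) (I + s1 *: X) (I + s2 *: Z) I I j in
   kron5 (fun j => t j *m y j) *m psi = kron5 y *m psi /\ kron5 y *m psi != 0.
  move=> s0 s1 s2 ss y.
  have [H1 H2] := vec pu e0 e1 e2 c01 c02 c12 z0 z1 z2 z01 z02 z12 TQ sA1 GiG Gp t0 t1 t2 ss.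
  rewrite B1_prod in H1 H2.
  have ey : kron5 y = kron5 g *m k5 (I + s0 *: Z) (I + s1 *: X) (I + s2 *: Z) I I.
    by rewrite k5_L5 kron5_mul.
  have et : kron5 (fun j => t j *m y j) = k5 Z X Z I I *m kron5 y.
    by rewrite k5_L5 kron5_mul.
  by rewrite et ey -mulmxA.
have [Ea Na] := key 1 1 1 ltac:(by rewrite !mulr1).
have [Eb Nb] := key (-1) (-1) 1 ltac:(by rewrite mulr1 mulrNN mulr1).
have [Ec Nc] := key 1 (-1) (-1) ltac:(by rewrite mul1r mulrNN mulr1).
do !split.
- exact: (eig_Zp (j0:=0) tt Ea Na erefl erefl).
- exact: (eig_Zm (j0:=0) tt Eb Nb erefl erefl).
- exact: (eig_Xp (j0:=1) tt Ea Na erefl erefl).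
- exact: (eig_Xm (j0:=1) tt Eb Nb erefl erefl).
- exact: (eig_Zp (j0:=2) tt Ea Na erefl erefl).
- exact: (eig_Zm (j0:=2) tt Ec Nc erefl erefl).
Qed.

Lemma B0_conds (g : 'I_5 -> M2) c : (forall j, g j \in unitmx) ->
  kron5 g *m psi = c *: psi ->
  ((g 0) 0 0 + (g 0) 0 1)^+2 = ((g 0) 1 0 + (g 0) 1 1)^+2 /\
  ((g 0) 0 0 - (g 0) 0 1)^+2 = ((g 0) 1 0 - (g 0) 1 1)^+2 /\
  (g 1) 0 0 * (g 1) 1 0 = 0 /\ (g 1) 0 1 * (g 1) 1 1 = 0.
Proof.
move=> U Gp.
have z0 : ev psi (k5 X I I I I) = 0 by zev (k5 Z X Z I I) sA1.
have z1 : ev psi (k5 I Z I I I) = 0 by zev (k5 Z X Z I I) sA1.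
have z2 : ev psi (k5 I I I I Z) = 0 by zev (k5 Z I I Z X) sA4.
have z01 : ev psi (k5 X I I I I *m k5 I Z I I I) = 0 by zev (k5 Z I I Z X) sA4.
have z02 : ev psi (k5 X I I I I *m k5 I I I I Z) = 0 by zev (k5 Z X Z I I) sA1.
have z12 : ev psi (k5 I Z I I I *m k5 I I I I Z) = 0 by zev (k5 Z X Z I I) sA1.
pose t := L5 X Z I I Z.
have tt : forall j, t j *m t j = 1%:M by rewrite /t; ttac.
have sS : k5 X Z I I Z *m k5 I Z X Z I *m k5 I I Z X Z *m psi = psi.
  by rewrite -!mulmxA sA3 sA2 sA0.
have e0 : k5 X I I I I *m psi = k5 I I (X *m Z) (Z *m X) I *m psi.
  by rewrite -{1}sS !mulmxA; congr (_ *m _); k5eq.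
have e1 : k5 I Z I I I *m psi = k5 I I X Z I *m psi.
  by rewrite -{1}sA2 mulmxA; congr (_ *m _); k5eq.
have e2 : k5 I I I I Z *m psi = k5 I I Z X I *m psi.
  by rewrite -{1}sA3 mulmxA; congr (_ *m _); k5eq.
have c01 : k5 X I I I I *m k5 I I X Z I = k5 I I X Z I *m k5 X I I I I by k5eq.
have c02 : k5 X I I I I *m k5 I I Z X I = k5 I I Z X I *m k5 X I I I I by k5eq.
have c12 : k5 I Z I I I *m k5 I I Z X I = k5 I I Z X I *m k5 I Z I I I by k5eq.
have TQ : k5 X Z I I Z = k5 X I I I I *m k5 I Z I I I *m k5 I I I I Z :> M32 by k5eq.
have GiG := kron5_inv U.
have t0 := comm_disj (t:=L5 X Z I I Z) (r:=L5 I I (X *m Z) (Z *m X) I) U ltac:(disj).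
have t1 := comm_disj (t:=L5 X Z I I Z) (r:=L5 I I X Z I) U ltac:(disj).
have t2 := comm_disj (t:=L5 X Z I I Z) (r:=L5 I I Z X I) U ltac:(disj).
have key : forall s0 s1 s2, s0 * s1 * s2 = 1 ->
   let y := fun j => g j *m L5 (I + s0 *: X) (I + s1 *: Z) I I (I + s2 *: Z) j in
   kron5 (fun j => t j *m y j) *m psi = kron5 y *m psi /\ kron5 y *m psi != 0.
  move=> s0 s1 s2 ss y.
  have [H1 H2] := vec pu e0 e1 e2 c01 c02 c12 z0 z1 z2 z01 z02 z12 TQ sA0 GiG Gp t0 t1 t2 ss.
  have P : (1%:M + s0 *: k5 X I I I I) *m (1%:M + s1 *: k5 I Z I I I) *m
           (1%:M + s2 *: k5 I I I I Z) = k5 (I + s0 *: X) (I + s1 *: Z) I I (I + s2 *: Z) :> M32.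
    rewrite -k5_1 -k5_Z0 -k5_D0 -k5_Z1 -k5_D1 -k5_Z4 -k5_D4 !k5_mul.
    by rewrite !mul1mx !mulmx1.
  rewrite P in H1 H2.
  have ey : kron5 y = kron5 g *m k5 (I + s0 *: X) (I + s1 *: Z) I I (I + s2 *: Z).
    by rewrite k5_L5 kron5_mul.
  have et : kron5 (fun j => t j *m y j) = k5 X Z I I Z *m kron5 y.
    by rewrite k5_L5 kron5_mul.
  by rewrite et ey -mulmxA.
have [Ea Na] := key 1 1 1 ltac:(by rewrite !mulr1).
have [Eb Nb] := key (-1) (-1) 1 ltac:(by rewrite mulr1 mulrNN mulr1).
do !split.
- exact: (eig_Xp (j0:=0) tt Ea Na erefl erefl).
- exact: (eig_Xm (j0:=0) tt Eb Nb erefl erefl).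
- exact: (eig_Zp (j0:=1) tt Ea Na erefl erefl).
- exact: (eig_Zm (j0:=1) tt Eb Nb erefl erefl).
Qed.

Lemma B2_conds (g : 'I_5 -> M2) c : (forall j, g j \in unitmx) ->
  kron5 g *m psi = c *: psi ->
  ((g 2) 0 0 + (g 2) 0 1)^+2 = ((g 2) 1 0 + (g 2) 1 1)^+2 /\
  ((g 2) 0 0 - (g 2) 0 1)^+2 = ((g 2) 1 0 - (g 2) 1 1)^+2.
Proof.
move=> U Gp.
have z0 : ev psi (k5 I Z I I I) = 0 by zev (k5 Z X Z I I) sA1.
have z1 : ev psi (k5 I I X I I) = 0 by zev (k5 Z X Z I I) sA1.
have z2 : ev psi (k5 I I I Z I) = 0 by zev (k5 I I Z X Z) sA3.
have z01 : ev psi (k5 I Z I I I *m k5 I I X I I) = 0 by zev (k5 I I Z X Z) sA3.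
have z02 : ev psi (k5 I Z I I I *m k5 I I I Z I) = 0 by zev (k5 Z X Z I I) sA1.
have z12 : ev psi (k5 I I X I I *m k5 I I I Z I) = 0 by zev (k5 Z X Z I I) sA1.
pose t := L5 I Z X Z I.
have tt : forall j, t j *m t j = 1%:M by rewrite /t; ttac.
have sS : k5 X Z I I Z *m k5 I Z X Z I *m k5 Z I I Z X *m psi = psi.
  by rewrite -!mulmxA sA4 sA2 sA0.
have e0 : k5 I Z I I I *m psi = k5 X I I I Z *m psi.
  by rewrite -{1}sA0 mulmxA; congr (_ *m _); k5eq.
have e1 : k5 I I X I I *m psi = k5 (X *m Z) I I I (Z *m X) *m psi.
  by rewrite -{1}sS !mulmxA; congr (_ *m _); k5eq.
have e2 : k5 I I I Z I *m psi = k5 Z I I I X *m psi.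
  by rewrite -{1}sA4 mulmxA; congr (_ *m _); k5eq.
have c01 : k5 I Z I I I *m k5 (X *m Z) I I I (Z *m X) = k5 (X *m Z) I I I (Z *m X) *m k5 I Z I I I.
  by k5eq.
have c02 : k5 I Z I I I *m k5 Z I I I X = k5 Z I I I X *m k5 I Z I I I by k5eq.
have c12 : k5 I I X I I *m k5 Z I I I X = k5 Z I I I X *m k5 I I X I I by k5eq.
have TQ : k5 I Z X Z I = k5 I Z I I I *m k5 I I X I I *m k5 I I I Z I :> M32 by k5eq.
have GiG := kron5_inv U.
have t0 := comm_disj (t:=L5 I Z X Z I) (r:=L5 X I I I Z) U ltac:(disj).
have t1 := comm_disj (t:=L5 I Z X Z I) (r:=L5 (X *m Z) I I I (Z *m X)) U ltac:(disj).
have t2 := comm_disj (t:=L5 I Z X Z I) (r:=L5 Z I I I X) U ltac:(disj).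
have key : forall s0 s1 s2, s0 * s1 * s2 = 1 ->
   let y := fun j => g j *m L5 I (I + s0 *: Z) (I + s1 *: X) (I + s2 *: Z) I j in
   kron5 (fun j => t j *m y j) *m psi = kron5 y *m psi /\ kron5 y *m psi != 0.
  move=> s0 s1 s2 ss y.
  have [H1 H2] := vec pu e0 e1 e2 c01 c02 c12 z0 z1 z2 z01 z02 z12 TQ sA2 GiG Gp t0 t1 t2 ss.
  have P : (1%:M + s0 *: k5 I Z I I I) *m (1%:M + s1 *: k5 I I X I I) *m
           (1%:M + s2 *: k5 I I I Z I) = k5 I (I + s0 *: Z) (I + s1 *: X) (I + s2 *: Z) I :> M32.
    rewrite -k5_1 -k5_Z1 -k5_D1 -k5_Z2 -k5_D2 -k5_Z3 -k5_D3 !k5_mul.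
    by rewrite !mul1mx !mulmx1.
  rewrite P in H1 H2.
  have ey : kron5 y = kron5 g *m k5 I (I + s0 *: Z) (I + s1 *: X) (I + s2 *: Z) I.
    by rewrite k5_L5 kron5_mul.
  have et : kron5 (fun j => t j *m y j) = k5 I Z X Z I *m kron5 y.
    by rewrite k5_L5 kron5_mul.
  by rewrite et ey -mulmxA.
have [Ea Na] := key 1 1 1 ltac:(by rewrite !mulr1).
have [Eb Nb] := key 1 (-1) (-1) ltac:(by rewrite mul1r mulrNN mulr1).
split.
- exact: (eig_Xp (j0:=2) tt Ea Na erefl erefl).
- exact: (eig_Xm (j0:=2) tt Eb Nb erefl erefl).
Qed.

End Psi.
End Gen.

Section IP.
Variable C : numClosedFieldType.
Variable n : nat.
Local Notation V := 'cV[C]_n.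

Definition ip (x y : V) : C := (adjm x *m y) 0 0.

Lemma ipE x y : ip x y = \sum_k (x k 0)^* * y k 0.
Proof. by rewrite /ip mxE; apply: eq_bigr => k _; rewrite !mxE. Qed.

Lemma ip_conj x y : (ip x y)^* = ip y x.
Proof.
rewrite !ipE rmorph_sum; apply: eq_bigr => k _.
by rewrite rmorphM /= conjCK mulrC.
Qed.

Lemma ipD x y z : ip x (y + z) = ip x y + ip x z.
Proof. by rewrite /ip mulmxDr mxE. Qed.
Lemma ipB x y z : ip x (y - z) = ip x y - ip x z.
Proof. by rewrite /ip mulmxBr !mxE. Qed.
Lemma ipZ x k y : ip x (k *: y) = k * ip x y.
Proof. by rewrite /ip -scalemxAr mxE. Qed.

Lemma ip_ge0 x : 0 <= ip x x.
Proof. by rewrite ipE; apply: sumr_ge0 => k _; rewrite mulrC mul_conjC_ge0. Qed.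

Lemma ip_eq0 x : ip x x = 0 -> x = 0.
Proof.
rewrite ipE => H; apply/matrixP => k l; rewrite [l]ord1 mxE.
have P : forall i, true -> 0 <= (x i 0)^* * x i 0.
  by move=> i _; rewrite mulrC mul_conjC_ge0.
have := psumr_eq0P P H (i := k) isT.
by rewrite mulrC => /eqP; rewrite mul_conjC_eq0 => /eqP.
Qed.

Lemma quad_rank1 (u w : V) : (adjm u *m (w *m adjm w) *m u) 0 0 = ip u w * (ip u w)^*.
Proof. by rewrite mulmxA -mulmxA mxE big_ord1 ip_conj. Qed.

End IP.

Section KProp.
Variable C : numClosedFieldType.

Lemma kraus_prop (psi beta : 'cV[C]_N5) m (K : 'I_m -> 'I_5 -> 'M[C]_2) :
  kraus_apply K (proj psi) = proj beta -> ip beta beta = 1 ->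
  forall i, kron5 (K i) *m psi = ip beta (kron5 (K i) *m psi) *: beta.
Proof.
move=> KA nb i.
set w := kron5 (K i) *m psi; set c := ip beta w; set u := w - c *: beta.
have ub : ip u beta = 0.
  by rewrite -ip_conj /u ipB ipZ nb mulr1 subrr rmorph0.
have E : \sum_k ip u (kron5 (K k) *m psi) * (ip u (kron5 (K k) *m psi))^* = 0.
  have := congr1 (fun M => (adjm u *m M *m u) 0 0) KA; rewrite /= /proj quad_rank1 ub mul0r.
  rewrite /kraus_apply mulmx_sumr mulmx_suml summxE => H; rewrite -[RHS]H.
  apply: eq_bigr => k _; rewrite -quad_rank1; congr ((_ *m _ *m _) 0 0).
  by rewrite !mulmxA adjm_mul mulmxA.
have P : forall k, true -> 0 <= ip u (kron5 (K k) *m psi) * (ip u (kron5 (K k) *m psi))^*.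
  by move=> k _; apply: mul_conjC_ge0.
have := psumr_eq0P P E (i := i) isT.
move/eqP; rewrite mul_conjC_eq0 => /eqP uw.
have : ip u u = 0 by rewrite {2}/u ipB ipZ ub mulr0 subr0.
move/ip_eq0 => /eqP; rewrite subr_eq0 => /eqP.
done.
Qed.

End KProp.


Section Part2.
Variable C : numClosedFieldType.
Local Notation M2 := 'M[C]_2.
Local Notation M32 := 'M[C]_N5.
Local Notation X := (PauliX : M2).
Local Notation Z := (PauliZ : M2).
Local Notation I := (1%:M : M2).

Lemma KK (h g : M2) : adjm h = h -> adjm (h *m g) *m (h *m g) = adjm g *m (h *m h) *m g.
Proof. by move=> hh; rewrite adjm_mul hh !mulmxA. Qed.

Lemma tr_pos (g : M2) : g \in unitmx -> 0 < \tr (adjm g *m (2^-1)%:M *m g *m 1%:M).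
Proof.
have [p [q [r [s ->]]]] : exists p q r s, g = m22 p q r s.
  by exists (g 0 0), (g 0 1), (g 1 0), (g 1 1); exact: m22_eta.
move/m22_unit => U.
have -> : \tr (adjm (m22 p q r s) *m (2^-1)%:M *m m22 p q r s *m 1%:M)
  = 2^-1 * (p * p^* + r * r^* + (q * q^* + s * s^*)).
  by m22n; rewrite m22_tr; ring.
apply: mulr_gt0; first by rewrite invr_gt0 ltr0n.
rewrite lt_def; apply/andP; split; last first.
  by rewrite !addr_ge0 // mul_conjC_ge0.
apply: contraNneq U => /eqP.
rewrite paddr_eq0 ?addr_ge0 ?mul_conjC_ge0 // => /andP [H1 H2].
move: H1; rewrite paddr_eq0 ?mul_conjC_ge0 // !mul_conjC_eq0 => /andP [/eqP -> /eqP ->].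
move: H2; rewrite paddr_eq0 ?mul_conjC_ge0 // !mul_conjC_eq0 => /andP [/eqP -> /eqP ->].
by rewrite !mulr0 subrr.
Qed.

Lemma parity (psi : 'cV[C]_N5) (g : 'I_5 -> M2) c e0 e1 e2 :
  (forall j, g j \in unitmx) -> psi != 0 ->
  k5 Z X Z I I *m psi = psi -> kron5 g *m psi = c *: psi ->
  g 0 *m Z = e0 *: (Z *m g 0) -> g 1 *m X = e1 *: (X *m g 1) -> g 2 *m Z = e2 *: (Z *m g 2) ->
  e0 * e1 * e2 = 1.
Proof.
move=> U pn Tp Gp c0 c1 c2.
have GT : kron5 g *m k5 Z X Z I I = (e0 * e1 * e2) *: (k5 Z X Z I I *m kron5 g).
  rewrite kron5E !k5_mul c0 c1 c2 k5_Z0 k5_Z1 k5_Z2 !scalerA mulmx1 mul1mx mulmx1 mul1mx.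
  by [].
have cn : c != 0.
  apply: contraNneq pn => c0'.
  by rewrite -[psi]mul1mx -(kron5_inv U) -mulmxA Gp c0' scale0r mulmx0.
have := congr1 (mulmx (kron5 g)) Tp.
rewrite mulmxA GT -scalemxAl -mulmxA Gp -scalemxAr Tp scalerA => /eqP.
rewrite -subr_eq0 -scalerBl scalemx_eq0 (negbTE pn) orbF.
rewrite subr_eq0 -{2}[c]mul1r (inj_eq (mulIf cn)) => /eqP.
done.
Qed.

End Part2.

Section Part2b.
Variable C : numClosedFieldType.
Local Notation M2 := 'M[C]_2.
Local Notation M32 := 'M[C]_N5.
Local Notation X := (PauliX : M2).
Local Notation Z := (PauliZ : M2).
Local Notation I := (1%:M : M2).

Lemma tr_sum m (F : 'I_m -> M32) : \tr (\sum_i F i) = \sum_i \tr (F i).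
Proof.
elim/big_rec2: _ => [|i x y _ <-]; first by rewrite mxtrace0.
by rewrite mxtraceD.
Qed.

Theorem part2 (a : C) (a0 : 0 < a) (psi : 'cV[C]_N5)
  (pu : (adjm psi *m psi) 0 0 = 1) (ps : forall i, ring_stab i *m psi = psi)
  (h : 'I_5 -> M2) (hh : forall j, adjm (h j) = h j) (hu : forall j, h j \in unitmx)
  (h0 : h 0 *m h 0 = (2^-1)%:M + a *: Z) (h1 : h 1 *m h 1 = (2^-1)%:M + a *: X)
  (h2 : h 2 *m h 2 = (2^-1)%:M + a *: Z) (h3 : h 3 *m h 3 = (2^-1)%:M)
  (h4 : h 4 *m h 4 = (2^-1)%:M)
  (beta : 'cV[C]_N5) (mu : C) (nb : ip beta beta = 1)
  (hb : beta = mu *: (kron5 h *m psi)) :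
  ~ SEP1_transforms psi beta.
Proof.
move=> [m [K [U [TP KA]]]].
case: m K U TP KA => [|m] K U TP KA.
  move: TP; rewrite /kraus_TP big_ord0 => /matrixP/(_ 0 0); rewrite !mxE /=.
  by move/eqP; rewrite eq_sym oner_eq0.
have prop := kraus_prop KA nb.
have psi0 : psi != 0.
  by apply/eqP => p0; move: pu; rewrite p0 mulmx0 mxE => /eqP; rewrite eq_sym oner_eq0.
pose g i j := invmx (h j) *m K i j.
have gu : forall i j, g i j \in unitmx.
  by move=> i j; rewrite /g unitmx_mul unitmx_inv hu U.
have Gp : forall i, kron5 (g i) *m psi = (ip beta (kron5 (K i) *m psi) * mu) *: psi.
  move=> i.
  have -> : kron5 (g i) = kron5 (fun j => invmx (h j)) *m kron5 (K i) by rewrite kron5_mul.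
  set c := ip beta (kron5 (K i) *m psi).
  rewrite -mulmxA (prop i) -/c hb scalerA -!scalemxAr mulmxA kron5_inv // mul1mx.
  by [].
have Kg : forall i j, K i j = h j *m g i j.
  by move=> i j; rewrite /g mulKVmx.
have sT : k5 Z X Z I I *m psi = psi by rewrite -rs1 ps.
have pos : forall i, 0 < \tr (adjm (kron5 (K i)) *m kron5 (K i) *m k5 Z X Z I I).
  move=> i.
  have [b10 [b11 [b12 [b13 [b14 b15]]]]] := B1_conds pu ps (gu i) (Gp i).
  have [b00 [b01 [b02 b03]]] := B0_conds pu ps (gu i) (Gp i).
  have [b20 b21] := B2_conds pu ps (gu i) (Gp i).
  have [e0 [l0 [E0 [L0 [C0 T0]]]]] :=
    pauli2 a0 (or_introl erefl : Z = Z \/ Z = X) (gu i 0) b10 b11 b00 b01.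
  have [e1 [l1 [E1 [L1 [C1 T1]]]]] :=
    pauli2 a0 (or_intror erefl : X = Z \/ X = X) (gu i 1) b02 b03 b12 b13.
  have [e2 [l2 [E2 [L2 [C2 T2]]]]] :=
    pauli2 a0 (or_introl erefl : Z = Z \/ Z = X) (gu i 2) b14 b15 b20 b21.
  have par := parity (gu i) psi0 sT (Gp i) C0 C1 C2.
  rewrite kron5E k5_adj !k5_mul k5_tr !Kg !KK // h0 h1 h2 h3 h4 T0 T1 T2.
  have p3 := tr_pos (gu i 3); have p4 := tr_pos (gu i 4).
  have -> : e0 * l0 * (e1 * l1) * (e2 * l2) = (e0 * e1 * e2) * (l0 * l1 * l2) by ring.
  by rewrite par mul1r !mulr_gt0.
have sumK := congr1 (fun M => \tr (M *m k5 Z X Z I I)) TP.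
move: sumK; rewrite /= mulmx_suml tr_sum mul1mx k5_tr.
have -> : \tr Z = 0 by rewrite m22_Z m22_tr subrr.
rewrite !mul0r => S0.
have P : forall i : 'I_m.+1, true -> 0 <= \tr (adjm (kron5 (K i)) *m kron5 (K i) *m k5 Z X Z I I).
  by move=> i _; apply: ltW.
have := psumr_eq0P P S0 (i := ord0) isT.
by move=> e; move: (pos ord0); rewrite e ltxx.
Qed.

End Part2b.



Section Part1.
Variable C : numClosedFieldType.
Local Notation M2 := 'M[C]_2.
Local Notation M32 := 'M[C]_N5.
Local Notation X := (PauliX : M2).
Local Notation Z := (PauliZ : M2).
Local Notation I := (1%:M : M2).
Local Notation Q0 := (k5 Z I I I I : M32).
Local Notation Q1 := (k5 I X I I I : M32).
Local Notation Q2 := (k5 I I Z I I : M32).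

Lemma sqc (x : C) : 0 <= x -> (sqrtC x)^* * sqrtC x = x.
Proof. by move=> x0; rewrite geC0_conj ?sqrtC_ge0 // -expr2 sqrtCK. Qed.

Definition P1 (s : C) (sig : M2) : M2 := 2^-1 *: (I + s *: sig).

Definition Kst (b : C) (h : 'I_5 -> M2) (s : 'I_5 -> M2) : 'I_5 -> M2 :=
  L5 (b *: (h 0 *m s 0)) (h 1 *m s 1) (h 2 *m s 2) (h 3 *m s 3) (h 4 *m s 4).
Definition Kpr (g s0 s1 s2 : C) : 'I_5 -> M2 :=
  L5 (g *: P1 s0 Z) (P1 s1 X) (P1 s2 Z) I I.

Definition Kfam (b g : C) (h : 'I_5 -> M2) : 'I_8 -> 'I_5 -> M2 := fun k =>
  match nat_of_ord k with
  | 0 => Kst b h (L5 I I I I I)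
  | 1 => Kst b h (L5 X Z I I Z)
  | 2 => Kst b h (L5 I Z X Z I)
  | 3 => Kst b h (L5 X I X Z Z)
  | 4 => Kpr g (-1) 1 1
  | 5 => Kpr g 1 (-1) 1
  | 6 => Kpr g 1 1 (-1)
  | _ => Kpr g (-1) (-1) (-1)
  end.

Lemma termSt b h s : (forall j, adjm (h j) = h j) ->
  adjm (kron5 (Kst b h s)) *m kron5 (Kst b h s) =
  (b^* * b) *: k5 (adjm (s 0) *m (h 0 *m h 0) *m s 0) (adjm (s 1) *m (h 1 *m h 1) *m s 1)
     (adjm (s 2) *m (h 2 *m h 2) *m s 2) (adjm (s 3) *m (h 3 *m h 3) *m s 3)
     (adjm (s 4) *m (h 4 *m h 4) *m s 4).
Proof.
move=> hh; rewrite /Kst -k5_L5 k5_adj k5_mul adjmZ -scalemxAl -scalemxAr scalerA.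
by rewrite !KK // k5_Z0.
Qed.

Lemma termPr g s0 s1 s2 :
  adjm (kron5 (Kpr g s0 s1 s2)) *m kron5 (Kpr g s0 s1 s2) =
  (g^* * g) *: k5 (adjm (P1 s0 Z) *m P1 s0 Z) (adjm (P1 s1 X) *m P1 s1 X)
     (adjm (P1 s2 Z) *m P1 s2 Z) I I.
Proof.
rewrite /Kpr -k5_L5 k5_adj k5_mul adjmZ -scalemxAl -scalemxAr scalerA.
by rewrite adjm1 mulmx1 k5_Z0.
Qed.

Lemma formA x y z :
  k5 (2^-1 *: (I + x *: Z)) (2^-1 *: (I + y *: X)) (2^-1 *: (I + z *: Z)) (2^-1 *: I) (2^-1 *: I)
  = (2^-1 * 2^-1 * 2^-1 * 2^-1 * 2^-1) *:
    ((1%:M + x *: Q0) *m (1%:M + y *: Q1) *m (1%:M + z *: Q2)).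
Proof. by rewrite B1_prod k5_Z0 k5_Z1 k5_Z2 k5_Z3 k5_Z4 !scalerA. Qed.

Lemma formB x y z :
  k5 (2^-1 *: (I + x *: Z)) (2^-1 *: (I + y *: X)) (2^-1 *: (I + z *: Z)) I I
  = (2^-1 * 2^-1 * 2^-1) *:
    ((1%:M + x *: Q0) *m (1%:M + y *: Q1) *m (1%:M + z *: Q2)).
Proof. by rewrite B1_prod k5_Z0 k5_Z1 k5_Z2 !scalerA. Qed.

Section Terms.
Variable a : C.
Variable h : 'I_5 -> M2.
Hypothesis hh : forall j, adjm (h j) = h j.
Hypothesis h0 : h 0 *m h 0 = (2^-1)%:M + a *: Z.
Hypothesis h1 : h 1 *m h 1 = (2^-1)%:M + a *: X.
Hypothesis h2 : h 2 *m h 2 = (2^-1)%:M + a *: Z.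
Hypothesis h3 : h 3 *m h 3 = (2^-1)%:M.
Hypothesis h4 : h 4 *m h 4 = (2^-1)%:M.

Local Notation prod x y z := ((1%:M + x *: Q0) *m (1%:M + y *: Q1) *m (1%:M + z *: Q2)).
Local Notation c5 := (2^-1 * 2^-1 * 2^-1 * 2^-1 * 2^-1 : C).

Lemma tS0 b : adjm (kron5 (Kst b h (L5 I I I I I))) *m kron5 (Kst b h (L5 I I I I I))
  = (b^* * b) *: (c5 *: prod (2 * a) (2 * a) (2 * a)).
Proof.
rewrite termSt // /= h0 h1 h2 h3 h4 -formA; congr (_ *: _); congr k5; m22f.
Qed.

Lemma tS1 b : adjm (kron5 (Kst b h (L5 X Z I I Z))) *m kron5 (Kst b h (L5 X Z I I Z))
  = (b^* * b) *: (c5 *: prod (-(2 * a)) (-(2 * a)) (2 * a)).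
Proof.
rewrite termSt // /= h0 h1 h2 h3 h4 -formA; congr (_ *: _); congr k5; m22f.
Qed.

Lemma tS2 b : adjm (kron5 (Kst b h (L5 I Z X Z I))) *m kron5 (Kst b h (L5 I Z X Z I))
  = (b^* * b) *: (c5 *: prod (2 * a) (-(2 * a)) (-(2 * a))).
Proof.
rewrite termSt // /= h0 h1 h2 h3 h4 -formA; congr (_ *: _); congr k5; m22f.
Qed.

Lemma tS3 b : adjm (kron5 (Kst b h (L5 X I X Z Z))) *m kron5 (Kst b h (L5 X I X Z Z))
  = (b^* * b) *: (c5 *: prod (-(2 * a)) (2 * a) (-(2 * a))).
Proof.
rewrite termSt // /= h0 h1 h2 h3 h4 -formA; congr (_ *: _); congr k5; m22f.
Qed.

Lemma tP4 g : adjm (kron5 (Kpr g (-1) 1 1)) *m kron5 (Kpr g (-1) 1 1)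
  = (g^* * g) *: ((2^-1 * 2^-1 * 2^-1) *: prod (-1) 1 1).
Proof.
rewrite termPr /P1 -formB; congr (_ *: _); congr k5; m22f.
Qed.

Lemma tP5 g : adjm (kron5 (Kpr g 1 (-1) 1)) *m kron5 (Kpr g 1 (-1) 1)
  = (g^* * g) *: ((2^-1 * 2^-1 * 2^-1) *: prod 1 (-1) 1).
Proof.
rewrite termPr /P1 -formB; congr (_ *: _); congr k5; m22f.
Qed.

Lemma tP6 g : adjm (kron5 (Kpr g 1 1 (-1))) *m kron5 (Kpr g 1 1 (-1))
  = (g^* * g) *: ((2^-1 * 2^-1 * 2^-1) *: prod 1 1 (-1)).
Proof.
rewrite termPr /P1 -formB; congr (_ *: _); congr k5; m22f.
Qed.

Lemma tP7 g : adjm (kron5 (Kpr g (-1) (-1) (-1))) *m kron5 (Kpr g (-1) (-1) (-1))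
  = (g^* * g) *: ((2^-1 * 2^-1 * 2^-1) *: prod (-1) (-1) (-1)).
Proof.
rewrite termPr /P1 -formB; congr (_ *: _); congr k5; m22f.
Qed.

Lemma TPfam b g : b^* * b = 8 / (1 + 8 * a^+3) ->
  g^* * g = 16 * a^+3 / (1 + 8 * a^+3) -> 1 + 8 * a^+3 != 0 ->
  kraus_TP (Kfam b g h).
Proof.
move=> eb eg D0.
rewrite /kraus_TP !big_ord_recl big_ord0 addr0 /=.
rewrite tS0 tS1 tS2 tS3 tP4 tP5 tP6 tP7 eb eg !scalerA !expand3.
move: (Q0 *m Q1 *m Q2) => M012.
move: (Q0 *m Q1) (Q0 *m Q2) (Q1 *m Q2) => M01 M02 M12.
move: Q0 Q1 Q2 => A0 A1 A2.
apply/matrixP => i j; rewrite !mxE.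
by field.
Qed.

Section Apply.
Variable psi : 'cV[C]_N5.
Hypothesis pu : (adjm psi *m psi) 0 0 = 1.
Hypothesis ps : forall i, ring_stab i *m psi = psi.

Lemma norm_hpsi : (adjm (kron5 h *m psi) *m (kron5 h *m psi)) 0 0 = (1 + 8 * a^+3) / 32.
Proof.
rewrite adjm_mul mulmxA -(mulmxA (adjm psi)).
have -> : adjm (kron5 h) *m kron5 h =
   k5 (2^-1 *: (I + (2 * a) *: Z)) (2^-1 *: (I + (2 * a) *: X)) (2^-1 *: (I + (2 * a) *: Z))
      (2^-1 *: I) (2^-1 *: I).
  rewrite kron5E k5_adj k5_mul !hh h0 h1 h2 h3 h4; congr k5; m22f.
rewrite formA -/(ev psi _) evZ.
have [z0 [z1 [z2 [z01 [z02 z12]]]]] := B1_zero ps.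
rewrite ev_expand //; last first.
  have -> : Q0 *m Q1 *m Q2 = k5 Z X Z I I by k5eq.
  exact: sA1 ps.
by field.
Qed.

Lemma term_apply (F : 'I_5 -> M2) :
  kron5 F *m proj psi *m adjm (kron5 F) = proj (kron5 F *m psi).
Proof. by rewrite /proj adjm_mul !mulmxA. Qed.

Lemma projZ k (v : 'cV[C]_N5) : proj (k *: v) = (k * k^*) *: proj v.
Proof. by rewrite /proj adjmZ -scalemxAl -scalemxAr scalerA. Qed.

Lemma KstP b s : kron5 s *m psi = psi -> kron5 (Kst b h s) *m psi = b *: (kron5 h *m psi).
Proof.
move=> sp; have -> : kron5 (Kst b h s) = b *: (kron5 h *m kron5 s).
  by rewrite /Kst -k5_L5 kron5E k5_mul k5_Z0.
by rewrite -scalemxAl -mulmxA sp.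
Qed.

Lemma P1Z s : (s = 1 \/ s = -1) -> P1 s Z *m Z = s *: P1 s Z.
Proof. by case => ->; rewrite /P1; m22f. Qed.
Lemma P1X s : (s = 1 \/ s = -1) -> P1 s X *m X = s *: P1 s X.
Proof. by case => ->; rewrite /P1; m22f. Qed.

Lemma KprP g s0 s1 s2 : (s0 = 1 \/ s0 = -1) -> (s1 = 1 \/ s1 = -1) ->
  (s2 = 1 \/ s2 = -1) -> s0 * s1 * s2 = -1 -> kron5 (Kpr g s0 s1 s2) *m psi = 0.
Proof.
move=> e0 e1 e2 ss.
have KT : kron5 (Kpr g s0 s1 s2) *m k5 Z X Z I I = (s0 * s1 * s2) *: kron5 (Kpr g s0 s1 s2).
  rewrite /Kpr -k5_L5 k5_mul -scalemxAl P1Z // P1X // P1Z // !mulmx1.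
  rewrite !k5_Z0 k5_Z1 k5_Z2 !scalerA; congr (_ *: _); ring.
have := congr1 (mulmx (kron5 (Kpr g s0 s1 s2))) (sA1 ps).
rewrite mulmxA KT ss scaleN1r mulNmx => E.
have : (2 : C) *: (kron5 (Kpr g s0 s1 s2) *m psi) = 0.
  by rewrite scaler_nat mulr2n -{1}E addNr.
by move/eqP; rewrite scalemx_eq0 pnatr_eq0 /= => /eqP.
Qed.

Lemma KAfam b g : b * b^* = 8 / (1 + 8 * a^+3) -> 0 < a ->
  kraus_apply (Kfam b g h) (proj psi) =
  proj ((vnorm (kron5 h *m psi))^-1 *: (kron5 h *m psi)).
Proof.
move=> eb a0.
have D0 : 0 < 1 + 8 * a^+3 by rewrite ltr_pwDl // mulr_ge0 // exprn_ge0 // ltW.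
rewrite /kraus_apply (eq_bigr (fun k => proj (kron5 (Kfam b g h k) *m psi))); last first.
  by move=> k _; rewrite term_apply.
rewrite !big_ord_recl big_ord0 addr0 /=.
rewrite (KstP b (s := L5 I I I I I)); last by rewrite -k5_L5 k5_1 mul1mx.
rewrite (KstP b (s := L5 X Z I I Z)); last by rewrite -k5_L5 (sA0 ps).
rewrite (KstP b (s := L5 I Z X Z I)); last by rewrite -k5_L5 (sA2 ps).
rewrite (KstP b (s := L5 X I X Z Z)); last first.
  have -> : kron5 (L5 X I X Z Z) = k5 X Z I I Z *m k5 I Z X Z I by rewrite -k5_L5; k5eq.
  by rewrite -mulmxA (sA2 ps) (sA0 ps).
rewrite !KprP //; try by [left|right]; try ring.
rewrite /vnorm norm_hpsi !projZ.
have -> : proj (0 : 'cV[C]_N5) = 0 by rewrite /proj mul0mx.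
rewrite !addr0 eb.
set nu := sqrtC ((1 + 8 * a ^+ 3) / 32).
have nu0 : 0 < nu by rewrite sqrtC_gt0 divr_gt0 // ltr0n.
have nuc : nu^-1^* = nu^-1 by rewrite geC0_conj // invr_ge0 ltW.
have nu2 : nu * nu = (1 + 8 * a ^+ 3) / 32 by rewrite -expr2 sqrtCK.
rewrite nuc -!scalerDl; congr (_ *: _).
rewrite -invfM nu2.
field.
by rewrite gt_eqF.
Qed.

End Apply.
End Terms.
End Part1.


Section Fin.
Variable C : numClosedFieldType.

Lemma m22_unitP (p q r s : C) : p * s - q * r != 0 -> m22 p q r s \in unitmx.
Proof.
move=> D.
have E : m22 p q r s *m ((p * s - q * r)^-1 *: m22 s (-q) (-r) p) = 1%:M.
  m22f.
by have [] := mulmx1_unit E.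
Qed.

Lemma ipZl n k (x y : 'cV[C]_n) : ip (k *: x) y = k^* * ip x y.
Proof. by rewrite -ip_conj ipZ rmorphM /= ip_conj. Qed.

End Fin.

Unset Implicit Arguments.
Theorem mainTheorem4 (R : realType) (a : R) (ha : 0 < a < 2^-1)
  (psi : 'cV[R[i]]_N5)
  (psi_unit : (adjm psi *m psi) 0 0 = 1)
  (psi_stab : forall i : 'I_5, ring_stab i *m psi = psi)
  (h : 'I_5 -> 'M[R[i]]_2)
  (h_psd : forall j, psd2 (h j))
  (h0 : h 0 *m h 0 = (2^-1)%:M + (a%:C)%C *: PauliZ)
  (h1 : h 1 *m h 1 = (2^-1)%:M + (a%:C)%C *: PauliX)
  (h2 : h 2 *m h 2 = (2^-1)%:M + (a%:C)%C *: PauliZ)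
  (h3 : h 3 *m h 3 = (2^-1)%:M)
  (h4 : h 4 *m h 4 = (2^-1)%:M) :
  let hpsi := kron5 h *m psi in
  let target := (vnorm hpsi)^-1 *: hpsi in
  SEP_transforms psi target /\ ~ SEP1_transforms psi target.
Proof.
move=> hpsi target.
set a' := (a%:C)%C in h0 h1 h2.
have [ha0 ha1] := andP ha.
have a0 : 0 < a' by rewrite /a' -(rmorph0 (real_complex R)) ltcR.
have a1 : 0 < 2^-1 - a'.
  have -> : 2^-1 - a' = ((2^-1 - a)%:C)%C by rewrite rmorphB fmorphV rmorph_nat.
  by rewrite -(rmorph0 (real_complex R)) ltcR subr_gt0.
have a2 : 0 < 2^-1 + a' by rewrite addr_gt0 // invr_gt0 ltr0n.
have hh : forall j, adjm (h j) = h j by move=> j; case: (h_psd j).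
have hu : forall j, h j \in unitmx.
  move=> j.
  suff : h j *m h j \in unitmx by rewrite unitmx_mul => /andP [].
  case: (ord5P j) => [->|[->|[->|[->|->]]]]; rewrite ?h0 ?h1 ?h2 ?h3 ?h4;
    m22n; apply: m22_unitP.
  - have -> : (2^-1 + a' * 1) * (2^-1 + a' * -1) - (0 + a' * 0) * (0 + a' * 0)
             = (2^-1 + a') * (2^-1 - a') by ring.
    by rewrite mulf_neq0 // gt_eqF.
  - have -> : (2^-1 + a' * 0) * (2^-1 + a' * 0) - (0 + a' * 1) * (0 + a' * 1)
             = (2^-1 + a') * (2^-1 - a') by ring.
    by rewrite mulf_neq0 // gt_eqF.
  - have -> : (2^-1 + a' * 1) * (2^-1 + a' * -1) - (0 + a' * 0) * (0 + a' * 0)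
             = (2^-1 + a') * (2^-1 - a') by ring.
    by rewrite mulf_neq0 // gt_eqF.
  - have -> : 2^-1 / 2 - 0 * 0 = 2^-1 * 2^-1 :> R[i] by ring.
    by rewrite mulf_neq0 // invr_eq0 pnatr_eq0.
  - have -> : 2^-1 / 2 - 0 * 0 = 2^-1 * 2^-1 :> R[i] by ring.
    by rewrite mulf_neq0 // invr_eq0 pnatr_eq0.
have D0 : 0 < 1 + 8 * a'^+3 by rewrite ltr_pwDl // mulr_ge0 // exprn_ge0 // ltW.
have nh := norm_hpsi hh h0 h1 h2 h3 h4 psi_unit psi_stab.
split.
- exists 8, (Kfam (sqrtC (8 / (1 + 8 * a'^+3))) (sqrtC (16 * a'^+3 / (1 + 8 * a'^+3))) h).
  split.
  + apply: (TPfam hh h0 h1 h2 h3 h4).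
    * by rewrite sqc // divr_ge0 // ltW.
    * by rewrite sqc // divr_ge0 // ?mulr_ge0 ?exprn_ge0 // ltW.
    * by rewrite gt_eqF.
  + apply: (KAfam hh h0 h1 h2 h3 h4 psi_unit psi_stab) => //.
    by rewrite mulrC sqc // divr_ge0 // ltW.
- apply: (part2 a0 psi_unit psi_stab hh hu h0 h1 h2 h3 h4 (mu := (vnorm hpsi)^-1) _ erefl).
  rewrite /target ipZl ipZ /ip nh /vnorm /hpsi nh.
  set nu := sqrtC ((1 + 8 * a' ^+ 3) / 32).
  have nu0 : 0 < nu by rewrite sqrtC_gt0 divr_gt0 // ltr0n.
  have nuc : nu^-1^* = nu^-1 by rewrite geC0_conj // invr_ge0 ltW.
  have nu2 : nu * nu = (1 + 8 * a' ^+ 3) / 32 by rewrite -expr2 sqrtCK.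
  rewrite nuc -nu2; field.
  by rewrite gt_eqF.
Qed.
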